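(* Suppose $D$ is an effective divisor class on $X$ and $A_t$ is an ample divisor with $2A_t\cdot D\le A_t\cdot K$. Then $\chi(D)<\frac{n-1}{8}$. In particular, if $10\le n\le 17$ and $\chi(D)\ge1$, then $\chi(D)=1$.
   Context: Let $X$ be the blowup of $\mathbb{P}^2_{\mathbb{C}}$ at $n$ very general points, with $H$ the pullback of a line class, $E_i$ the exceptional divisors, $E=\sum_iE_i$, and $K=K_X=-3H+E$. For real $t$, $A_t=tH-E$. Write $\chi(D)=\chi(\mathcal{O}_X(D))$. A divisor class is effective if it is the class of an effective divisor (zero allowed). *)

(* Defs.v *)
From HB Require Import structures.
From mathcomp Require Import all_boot all_order all_algebra.
From mathcomp Require Import reals complex.
Set Implicit Arguments. Unset Strict Implicit. Unset Printing Implicit Defensive.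
Import Order.TTheory GRing.Theory Num.Theory.
Local Open Scope ring_scope.

Record fpoly (I : finType) (K : nzRingType) := FPoly {
  fp_bound : nat;
  fp_coef : {ffun {ffun I -> 'I_fp_bound.+1} -> K} }.

Definition fp_eval (I : finType) (K : comNzRingType) (P : fpoly I K) (z : I -> K) : K :=
  \sum_(a : {ffun I -> 'I_(fp_bound P).+1}) fp_coef P a * \prod_(v : I) z v ^+ a v.

Definition fp_nonzero (I : finType) (K : nzRingType) (P : fpoly I K) : Prop :=
  fp_coef P != 0.

(* pts p = (x-coordinate, y-coordinate) of the p-th point [x : y : 1].     *)
Definition config (K : Type) (n : nat) := 'I_n -> K * K.

Definition coords (K : Type) (n : nat) (pts : config K n) (v : 'I_n * bool) : K :=
  if v.2 then (pts v.1).2 else (pts v.1).1.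

(* A property P holds for very general configurations of n points:
   it holds outside a countable union of proper Zariski-closed subsets
   of the configuration space.                                              *)
Definition very_general (K : comNzRingType) (n : nat) (P : config K n -> Prop) : Prop :=
  exists F : nat -> fpoly ('I_n * bool)%type K,
    (forall k, fp_nonzero (F k)) /\
    forall pts : config K n, (forall k, fp_eval (F k) (coords pts) != 0) -> P pts.

(* The class (d, m) denotes D = d H - sum_i m_i E_i.
   Intersection form: H^2 = 1, E_i^2 = -1, H.E_i = 0, E_i.E_j = 0 (i<>j). *)

(* The plane curve {f = 0}, where f(x,y) = sum c_(i,j) x^i y^j has total degree
   <= d (dehomogenisation of a degree-d form), has multiplicity >= mu at (a,b):
   all Taylor coefficients of f at (a,b) of total order < mu vanish.          *)
Definition mult_ge (K : comNzRingType) (d : nat) (c : {ffun 'I_d.+1 * 'I_d.+1 -> K})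
  (ab : K * K) (mu : int) : Prop :=
  forall k l : nat, ((k + l)%:Z < mu)%R ->
    \sum_(i < d.+1) \sum_(j < d.+1)
       c (i, j) * ('C(i, k) * 'C(j, l))%:R * ab.1 ^+ (i - k) * ab.2 ^+ (j - l) = 0.

(* D = d H - sum m_i E_i is effective: D = C~ + sum a_i E_i (a_i >= 0) with C~
   the proper transform of a plane curve of degree d (possibly empty, d = 0),
   i.e. a nonzero polynomial of degree <= d with multiplicity >= m_i at p_i. *)
Definition effective (K : comNzRingType) (n : nat) (pts : config K n)
  (d : int) (m : 'I_n -> int) : Prop :=
  exists dn : nat, d = dn%:Z /\
    exists c : {ffun 'I_dn.+1 * 'I_dn.+1 -> K},
      c != 0 /\
      (forall i j : 'I_dn.+1, (dn < i + j)%N -> c (i, j) = 0) /\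
      (forall p : 'I_n, mult_ge c (pts p) (m p)).

Section Intersections.
Variable R : realType.

Definition idot (n : nat) (d : int) (m : 'I_n -> int) (d' : int) (m' : 'I_n -> int) : R :=
  (d * d')%:~R - \sum_(i < n) (m i * m' i)%:~R.

Definition KX_d : int := -3.
Definition KX_m (n : nat) : 'I_n -> int := fun _ => -1.

(* A_t . D  for A_t = t H - E *)
Definition Adot (n : nat) (t : R) (d : int) (m : 'I_n -> int) : R :=
  t * d%:~R - \sum_(i < n) (m i)%:~R.

Definition Asq (n : nat) (t : R) : R := t ^+ 2 - n%:R.

(* chi(O_X(D)) by Riemann-Roch: 1 + (D.D - D.K)/2 *)
Definition chi (n : nat) (d : int) (m : 'I_n -> int) : R :=
  1 + (idot d m d m - idot d m KX_d (@KX_m n)) / 2.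

(* Ampleness of the R-divisor A_t (Nakai-Moishezon criterion on a surface):
   A_t^2 > 0 and A_t . C > 0 for every nonzero effective class C. *)
Definition ample (n : nat) (pts : config R[i] n) (t : R) : Prop :=
  0 < Asq n t /\
  forall (d : int) (m : 'I_n -> int),
    effective pts d m -> (d != 0 \/ exists i, m i != 0) -> 0 < Adot t d m.

End Intersections.

Arguments idot {R n}.
Arguments Adot {R n}.
Arguments Asq {R}.
Arguments chi {R n}.
Arguments ample {R n}.

(* Main.v *)
Require Import Defs.
From HB Require Import structures.
From mathcomp Require Import all_boot all_order all_algebra.
From mathcomp Require Import reals complex.
From mathcomp Require Import ring lra zify.
Import Order.TTheory GRing.Theory Num.Theory.
Local Open Scope ring_scope.
Lemma ev (z : int) : ((z * (z + 1)) %/ 2)%Z * 2 = z * (z + 1).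
Proof.
apply: divzK; apply/dvdzP.
have e := divz_eq z 2.
have h1 : (0 <= z %% 2)%Z by apply: modz_ge0.
have h2 : (z %% 2 < 2)%Z by apply: ltz_pmod.
have [r0|r1] : (z %% 2 = 0)%Z \/ (z %% 2 = 1)%Z by lia.
- exists ((z %/ 2)%Z * (z+1)). rewrite {1}e r0. ring.
- exists (z * ((z %/ 2)%Z + 1)). rewrite {2}e r1. ring.
Qed.

Lemma cs (R : realType) n (x : 'I_n -> R) : (\sum_i x i)^+2 <= n%:R * \sum_i (x i)^+2.
Proof.
case: n x => [|n] x; first by rewrite !big_ord0 mul0r expr0n.
set S1 := \sum_i x i; set S2 := \sum_i (x i)^+2.
have key l : 0 <= S2 - 2 * l * S1 + n.+1%:R * l ^+ 2.
  have : 0 <= \sum_i (x i - l) ^+ 2 by apply: sumr_ge0 => i _; exact: sqr_ge0.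
  have -> : \sum_i (x i - l) ^+ 2 = \sum_i ((x i)^+2 - (2 * l) * x i + l ^+ 2).
    by apply: eq_bigr => i _; ring.
  rewrite !big_split /= sumrN -mulr_sumr sumr_const card_ord -/S1 -/S2 => h.
  have e1 : l ^+ 2 *+ n.+1 = n.+1%:R * l^+2 by rewrite mulr_natl.
  have e2 : (l *+ 2) = 2 * l by rewrite mulr_natl.
  by rewrite e1 in h.
have np : 0 < n.+1%:R :> R by rewrite ltr0n.
have := key (S1 / n.+1%:R).
move=> h.
have : 0 <= n.+1%:R * (S2 - 2 * (S1 / n.+1%:R) * S1 + n.+1%:R * (S1 / n.+1%:R) ^+ 2) by apply: mulr_ge0 => //; exact: ltW.
have -> : n.+1%:R * (S2 - 2 * (S1 / n.+1%:R) * S1 + n.+1%:R * (S1 / n.+1%:R) ^+ 2) = n.+1%:R * S2 - S1 ^+ 2.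
  by field; rewrite addrC natr1 pnatr_eq0.
lra.
Qed.

Lemma num0 (R : realType) (t d a S2 N : R) : 0 < t -> N < t^+2 -> 0 <= d -> 0 < N ->
  (t*d - a)^+2 <= N*S2 -> 2*a <= t*(-3) + N ->
  1 + (d^+2 + 3*d - S2 - (t*d - a))/2 < (N-1)/8.
Proof.
move=> t0 tN d0 Np cs h.
have s1 : N*d^+2 - (t*d-a)^+2 + N*a - N*(t-3)*d <= N*a - a^+2.
  have p1 : 0 <= d*(t^+2 - N) by apply: mulr_ge0; lra.
  have p2 : t*(2*a) <= t*(t*(-3) + N) by rewrite ler_wpM2l //; lra.
  have br : d * (N - t^+2) + 2*t*a - N*t + 3*N <= 0 by nra.
  nra.
have s2 : N*a - a^+2 <= N*(N - 3*t)/2 - (N - 3*t)^+2/4.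
  have q1 : 0 <= ((N - 3*t)/2 - a) * (N - a - (N - 3*t)/2) by apply: mulr_ge0; lra.
  nra.
have s3 : 8*N + 4*(N*(N - 3*t)/2 - (N - 3*t)^+2/4) < N^+2 - N by nra.
suff : N * (8 * (1 + (d^+2 + 3*d - S2 - (t*d - a))/2) - N + 1) < 0.
  rewrite pmulr_rlt0 //; lra.
nra.
Qed.

Lemma num (R : realType) (t d S1 S2 N : R) : 0 < t -> N < t^+2 -> 0 <= d -> 0 <= N ->
  S1^+2 <= N*S2 -> 2*(t*d - S1) <= t*(-3) + N ->
  1 + (d^+2 + 3*d - S2 - S1)/2 < (N-1)/8.
Proof.
move=> t0 tN d0 N0 cs h.
have [Nz|Np] : N = 0 \/ 0 < N by lra.
  subst N. have S10 : S1 = 0 by nra. subst S1. nra.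
have e : S1 = t*d - (t*d - S1) by ring.
rewrite e in cs *; apply: num0 => //; lra.
Qed.

Theorem proposition4p1 (R : realType) (n : nat) :
  very_general (K := R[i]) (n := n) (fun pts =>
    forall (d : int) (m : 'I_n -> int) (t : R),
      ample pts t ->
      effective pts d m ->
      2 * Adot t d m <= Adot t KX_d (@KX_m n) ->
      (chi d m : R) < (n%:R - 1) / 8 /\
      ((10 <= n <= 17)%N -> 1 <= (chi d m : R) -> (chi d m : R) = 1)).
Proof.
exists (fun _ => @FPoly _ _ 0 [ffun => 1]).
split.
  move=> k; rewrite /fp_nonzero /=; apply/eqP => /ffunP /(_ [ffun => ord0]).
  by rewrite !ffunE => /eqP; rewrite oner_eq0.
move=> pts _ d m t [Apos Aeff] [dn [-> _]] h2.
have effH : effective pts 1 (fun _ => 0).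
  exists 1%N; split => //.
  exists [ffun ij : 'I_2 * 'I_2 => if (ij.1 == ord0) && (ij.2 == ord0) then (1 : R[i]) else 0].
  split.
    apply/eqP => /ffunP /(_ (ord0, ord0)); rewrite !ffunE /= => /eqP.
    by rewrite oner_eq0.
  split.
    move=> i j hij; rewrite ffunE /=.
    case: ifP => // /andP [/eqP ei /eqP ej]; by rewrite ei ej in hij.
  by move=> p k l /=; lia.
have t0 : 0 < t.
  have := Aeff 1 (fun _ => 0) effH (or_introl (oner_neq0 _)).
  by rewrite /Adot big1 // subr0 mulr1.
have tN : n%:R < t ^+ 2 by move: Apos; rewrite /Asq subr_gt0.
set S1 := \sum_i ((m i)%:~R : R).
set S2 := \sum_i ((m i)%:~R : R) ^+ 2.
have dR0 : 0 <= (dn%:R : R) by rewrite ler0n.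
have eA : Adot t (Posz dn) m = t * dn%:R - S1 by [].
have eK : Adot t KX_d (@KX_m n) = t * (-3) + n%:R.
  rewrite /Adot /KX_d /KX_m sumr_const card_ord.
  have -> : ((-3 : int)%:~R : R) = -3 by [].
  have -> : ((-1 : int)%:~R : R) = -1 by [].
  by rewrite mulNrn opprK.
have echi : chi (Posz dn) m = 1 + ((dn%:R : R)^+2 + 3 * dn%:R - S2 - S1) / 2.
  rewrite /chi /idot /KX_d /KX_m.
  have -> : \sum_i (((m i * m i)%:~R) : R) = S2.
    by apply: eq_bigr => i _; rewrite intrM expr2.
  have -> : \sum_i (((m i * -1)%:~R) : R) = - S1.
    by rewrite /S1 -sumrN; apply: eq_bigr => i _; rewrite mulrN1 intrN.
  have -> : (((Posz dn * Posz dn)%:~R) : R) = dn%:R ^+ 2 by rewrite intrM expr2.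
  have -> : (((Posz dn * -3)%:~R) : R) = dn%:R * (-3) by rewrite intrM.
  congr (1 + _ / 2); ring.
have main : (chi (Posz dn) m : R) < (n%:R - 1) / 8.
  rewrite echi; apply: (@num _ _ _ _ _ _ t0 tN dR0 (ler0n R n) (@cs R n (fun i => (m i)%:~R))).
  by rewrite -eA -eK.
split => // /andP [n10 n17] c1.
set q : int := ((Posz dn * (Posz dn + 1)) %/ 2)%Z + Posz dn - \sum_i ((m i * (m i + 1)) %/ 2)%Z.
have eq2 : \sum_i (m i * (m i + 1)) = (\sum_i ((m i * (m i + 1)) %/ 2)%Z) * 2.
  by rewrite mulr_suml; apply: eq_bigr => i _; rewrite ev.
have eq1 := ev (Posz dn).
have eN : (dn%:R : R)^+2 + 3 * dn%:R - S2 - S1 = ((Posz dn * (Posz dn + 3)) - \sum_i (m i * (m i + 1)))%:~R.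
  rewrite intrB intrM intrD rmorph_sum /=.
  have -> : \sum_i (((m i * (m i + 1))%:~R) : R) = S2 + S1.
    rewrite /S2 /S1 -big_split; apply: eq_bigr => i _; rewrite intrM intrD /=; ring.
  have -> : ((3 : int)%:~R : R) = 3 by [].
  ring.
have eZ : (Posz dn * (Posz dn + 3)) - \sum_i (m i * (m i + 1)) = q * 2.
  rewrite eq2 /q.
  have -> : Posz dn * (Posz dn + 3) = Posz dn * (Posz dn + 1) + 2 * Posz dn by ring.
  rewrite -{1}eq1; ring.
have cq : (chi (Posz dn) m : R) = (1 + q)%:~R.
  rewrite echi eN eZ intrD intrM.
  have -> : ((2 : int)%:~R : R) = 2 by [].
  have -> : ((1 : int)%:~R : R) = 1 by [].
  by field.
have h17 : (n%:R : R) <= 17 by rewrite (ler_nat R n 17).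
have lt2 : (chi (Posz dn) m : R) < 2 by lra.
rewrite cq in c1 lt2 *.
have : (1 : R) = (1 : int)%:~R by [].
move=> e1.
have : (2 : R) = (2 : int)%:~R by [].
move=> e2.
rewrite e1 ler_int in c1. rewrite e2 ltr_int in lt2.
have -> : 1 + q = 1 by lia.
by [].
Qed.
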